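(* Let $V\subset\mathbb{S}^3$ be a saturated open set and $\zeta$ a smooth unit vector field on $V$ whose integral curves are great circles. Define $f:V\to\mathbb{S}^2:=\{q\in\operatorname{Im}\mathbb{H}:|q|=1\}$ by $f(p)=\overline{p}\cdot\zeta(p)$ (quaternionic multiplication). Then $f$ is constant along the integral curves of $\zeta$, and $f$ is a harmonic map (with respect to the round metrics of $\mathbb{S}^3$ and $\mathbb{S}^2$) if and only if $\zeta$ is a harmonic unit vector field, i.e. $\Delta\zeta+|\nabla\zeta|^2\zeta=0$ on $V$.
   Context: $\mathbb{S}^3$ is the set of unit quaternions in $\mathbb{H}\cong\mathbb{R}^4$ with round metric and Levi-Civita connection $\nabla$; $\overline{p}$ is the quaternionic conjugate. An open set $V\subset\mathbb{S}^3$ carrying a unit vector field $\zeta$ whose integral curves are great circles is called saturated if for every $x\in V$ the whole great circle through $x$ tangent to $\zeta(x)$ lies in $V$. $\Delta\zeta=\operatorname{trace}\nabla^2\zeta$ is the rough Laplacian, where $\nabla^2_{v,w}\zeta=\nabla_v\nabla_w\zeta-\nabla_{\nabla_vw}\zeta$. A unit vector field is harmonic (a critical point of the energy $\tfrac12\int|\nabla\zeta|^2$ under variations through unit vector fields) iff $\Delta\zeta+|\nabla\zeta|^2\zeta=0$. A map is harmonic if its tension field (trace of its Hessian) vanishes. *)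

(* Defs.v *)
From Stdlib Require Import Reals Lra.
From Coquelicot Require Import Coquelicot.
Open Scope R_scope.

Record quat := mkQ { q0 : R; q1 : R; q2 : R; q3 : R }.

Definition qadd (a b : quat) : quat :=
  mkQ (q0 a + q0 b) (q1 a + q1 b) (q2 a + q2 b) (q3 a + q3 b).
Definition qscale (s : R) (a : quat) : quat :=
  mkQ (s * q0 a) (s * q1 a) (s * q2 a) (s * q3 a).
Definition qsub (a b : quat) : quat := qadd a (qscale (-1) b).
Definition qzero : quat := mkQ 0 0 0 0.
Definition qdot (a b : quat) : R :=
  q0 a * q0 b + q1 a * q1 b + q2 a * q2 b + q3 a * q3 b.
Definition qnorm (a : quat) : R := sqrt (qdot a a).

Definition qmul (a b : quat) : quat :=
  mkQ (q0 a * q0 b - q1 a * q1 b - q2 a * q2 b - q3 a * q3 b)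
      (q0 a * q1 b + q1 a * q0 b + q2 a * q3 b - q3 a * q2 b)
      (q0 a * q2 b - q1 a * q3 b + q2 a * q0 b + q3 a * q1 b)
      (q0 a * q3 b + q1 a * q2 b - q2 a * q1 b + q3 a * q0 b).
Definition qconj (a : quat) : quat := mkQ (q0 a) (- q1 a) (- q2 a) (- q3 a).

Definition qi : quat := mkQ 0 1 0 0.
Definition qj : quat := mkQ 0 0 1 0.
Definition qk : quat := mkQ 0 0 0 1.

Definition S3 (p : quat) : Prop := qdot p p = 1.

Definition ebasis (k : nat) : quat :=
  match k with 0 => mkQ 1 0 0 0 | 1 => qi | 2 => qj | _ => qk end.

Definition open4 (W : quat -> Prop) : Prop :=
  forall x, W x -> exists eps, 0 < eps /\
    forall y, qnorm (qsub y x) < eps -> W y.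

Definition open_in_S3 (V : quat -> Prop) : Prop :=
  (forall x, V x -> S3 x) /\
  forall x, V x -> exists eps, 0 < eps /\
    forall y, S3 y -> qnorm (qsub y x) < eps -> V y.

Fixpoint pder (ks : list nat) (g : quat -> R) : quat -> R :=
  match ks with
  | nil => g
  | cons k ks' => fun x => Derive (fun t => pder ks' g (qadd x (qscale t (ebasis k)))) 0
  end.

Definition cont_at (g : quat -> R) (x : quat) : Prop :=
  forall eps, 0 < eps -> exists delta, 0 < delta /\
    forall y, qnorm (qsub y x) < delta -> Rabs (g y - g x) < eps.

Definition smooth_on (W : quat -> Prop) (g : quat -> R) : Prop :=
  forall ks x, W x ->
    cont_at (pder ks g) x /\
    forall k, (k < 4)%nat ->
      ex_derive (fun t => pder ks g (qadd x (qscale t (ebasis k)))) 0.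

Definition smooth_map_on (V : quat -> Prop) (F : quat -> quat) : Prop :=
  exists (W : quat -> Prop) (G : quat -> quat),
    open4 W /\ (forall p, V p -> W p) /\
    smooth_on W (fun x => q0 (G x)) /\ smooth_on W (fun x => q1 (G x)) /\
    smooth_on W (fun x => q2 (G x)) /\ smooth_on W (fun x => q3 (G x)) /\
    (forall p, V p -> G p = F p).

Definition dQ (c : R -> quat) : quat :=
  mkQ (Derive (fun t => q0 (c t)) 0) (Derive (fun t => q1 (c t)) 0)
      (Derive (fun t => q2 (c t)) 0) (Derive (fun t => q3 (c t)) 0).

(** A curve in S^3 through p with velocity v (for v tangent at p). *)
Definition scurve (p v : quat) (t : R) : quat :=
  qscale (/ qnorm (qadd p (qscale t v))) (qadd p (qscale t v)).

Definition dmap (X : quat -> quat) (p v : quat) : quat :=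
  dQ (fun t => X (scurve p v t)).

(** Orthogonal projection onto the orthogonal complement of the unit vector n
    (= tangent space T_n S^3, resp. T_n S^2 inside Im H). *)
Definition proj (n w : quat) : quat := qsub w (qscale (qdot w n) n).

(** Levi-Civita connection of S^3: tangential part of the ambient derivative. *)
Definition nabla (X : quat -> quat) (p v : quat) : quat := proj p (dmap X p v).

(** Global orthonormal (left-invariant) frame E_1, E_2, E_3 of S^3:
    E_k(q) = q.i, q.j, q.k. *)
Definition frame (k : nat) (q : quat) : quat :=
  match k with 1 => qmul q qi | 2 => qmul q qj | _ => qmul q qk end.

Definition nabla2 (X : quat -> quat) (p : quat) (k : nat) : quat :=
  qsub (nabla (fun q => nabla X q (frame k q)) p (frame k p))
       (nabla X p (nabla (frame k) p (frame k p))).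

Definition rough_lap (X : quat -> quat) (p : quat) : quat :=
  qadd (nabla2 X p 1) (qadd (nabla2 X p 2) (nabla2 X p 3)).

Definition grad_sq (X : quat -> quat) (p : quat) : R :=
  qdot (nabla X p (frame 1 p)) (nabla X p (frame 1 p)) +
  qdot (nabla X p (frame 2 p)) (nabla X p (frame 2 p)) +
  qdot (nabla X p (frame 3 p)) (nabla X p (frame 3 p)).

Definition harmonic_uvf (zeta : quat -> quat) (V : quat -> Prop) : Prop :=
  forall p, V p -> qadd (rough_lap zeta p) (qscale (grad_sq zeta p) (zeta p)) = qzero.

(** Second fundamental form of f : S^3 -> S^2 (S^2 subset Im H) on E_k:
    (nabla df)(E_k,E_k) = nabla^f_{E_k}(df E_k) - df(nabla_{E_k} E_k),
    where the pull-back connection is the tangential (to S^2 at f p)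
    part of the ambient derivative. *)
Definition hess_map (f : quat -> quat) (p : quat) (k : nat) : quat :=
  qsub (proj (f p) (dmap (fun q => dmap f q (frame k q)) p (frame k p)))
       (dmap f p (nabla (frame k) p (frame k p))).

Definition tension (f : quat -> quat) (p : quat) : quat :=
  qadd (hess_map f p 1) (qadd (hess_map f p 2) (hess_map f p 3)).

Definition harmonic_map (f : quat -> quat) (V : quat -> Prop) : Prop :=
  forall p, V p -> tension f p = qzero.

Definition gcircle (x w : quat) (t : R) : quat :=
  qadd (qscale (cos t) x) (qscale (sin t) w).

Definition saturated (V : quat -> Prop) (zeta : quat -> quat) : Prop :=
  forall x, V x -> forall t, V (gcircle x (zeta x) t).

Definition unit_tangent_field (V : quat -> Prop) (zeta : quat -> quat) : Prop :=
  forall p, V p -> qdot (zeta p) p = 0 /\ qdot (zeta p) (zeta p) = 1.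

(** The integral curves of zeta are great circles: the integral curve through
    x is t |-> cos t x + sin t zeta(x), i.e. its velocity is zeta of it. *)
Definition geodesic_field (V : quat -> Prop) (zeta : quat -> quat) : Prop :=
  forall x, V x -> forall t,
    zeta (gcircle x (zeta x) t) = qadd (qscale (- sin t) x) (qscale (cos t) (zeta x)).

(* Main.v *)
Require Import Defs.
From Stdlib Require Import Reals Lra Psatz List.
From Coquelicot Require Import Coquelicot.
Open Scope R_scope.

Definition qc (i:nat) (y:quat) : R :=
  match i with 0 => q0 y | 1 => q1 y | 2 => q2 y | _ => q3 y end.
Definition upd (i:nat) (y:quat) (s:R) : quat :=
  match i with
  | 0 => mkQ s (q1 y) (q2 y) (q3 y)
  | 1 => mkQ (q0 y) s (q2 y) (q3 y)
  | 2 => mkQ (q0 y) (q1 y) s (q3 y)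
  | _ => mkQ (q0 y) (q1 y) (q2 y) s end.

Lemma upd_shift i y s t : (i < 4)%nat ->
  qadd (upd i y s) (qscale t (ebasis i)) = upd i y (s + t).
Proof.
  intros Hi. destruct i as [|[|[|[|i]]]]; try lia;
  unfold upd, qadd, qscale, ebasis, qi, qj, qk; simpl; f_equal; ring.
Qed.

Lemma qc_upd_same i y s : qc i (upd i y s) = s.
Proof. destruct i as [|[|[|[|i]]]]; reflexivity. Qed.

Lemma is_derive_shift (F : R -> R) s l :
  is_derive (fun t => F (s + t)) 0 l -> is_derive F s l.
Proof.
  intros H.
  assert (H2 : is_derive (fun u => (fun t => F (s + t)) (u - s)) s (scal 1 l)).
  { apply (is_derive_comp (fun t => F (s + t)) (fun u => u - s)).
    - replace (s - s) with 0 by ring. exact H.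
    - auto_derive; [easy| ring]. }
  replace (scal 1 l) with l in H2 by (symmetry; apply (scal_one (K:=R_AbsRing))).
  eapply is_derive_ext; [|exact H2]. intros u; simpl. f_equal; ring.
Qed.

Definition box (r : R) (x y : quat) : Prop :=
  Rabs (q0 y - q0 x) < r /\ Rabs (q1 y - q1 x) < r /\
  Rabs (q2 y - q2 x) < r /\ Rabs (q3 y - q3 x) < r.

Lemma sq_abs z : z * z = Rabs z * Rabs z.
Proof. rewrite <- Rabs_mult. rewrite Rabs_right; nra. Qed.

Lemma qnorm_le_sum v : qnorm v <= Rabs (q0 v) + Rabs (q1 v) + Rabs (q2 v) + Rabs (q3 v).
Proof.
  unfold qnorm, qdot.
  pose proof (Rabs_pos (q0 v)); pose proof (Rabs_pos (q1 v));
  pose proof (Rabs_pos (q2 v)); pose proof (Rabs_pos (q3 v)).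
  apply Rsqr_incr_0_var.
  - rewrite Rsqr_sqrt by nra.
    unfold Rsqr. rewrite (sq_abs (q0 v)), (sq_abs (q1 v)), (sq_abs (q2 v)), (sq_abs (q3 v)).
    nra.
  - lra.
Qed.

Lemma upd_self i y : upd i y (qc i y) = y.
Proof. destruct y; destruct i as [|[|[|[|i]]]]; reflexivity. Qed.

Lemma box_upd r x y j s : (j < 4)%nat -> box r x y -> Rabs (s - qc j x) < r -> box r x (upd j y s).
Proof.
  intros Hj [? [? [? ?]]] Hs. destruct j as [|[|[|[|j]]]]; try lia;
  unfold box; simpl in *; repeat split; assumption.
Qed.

Lemma box_qc r x y j : box r x y -> Rabs (qc j y - qc j x) < r.
Proof. intros [? [? [? ?]]]. destruct j as [|[|[|[|j]]]]; simpl; assumption. Qed.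

Definition pd (j : nat) (g : quat -> R) : quat -> R := pder (cons j nil) g.

Lemma partial_is_derive (g : quat -> R) (W : quat -> Prop) j y s :
  (j < 4)%nat ->
  (forall z, W z -> forall j, (j < 4)%nat -> ex_derive (fun t => g (qadd z (qscale t (ebasis j)))) 0) ->
  W (upd j y s) ->
  is_derive (fun u => g (upd j y u)) s (pd j g (upd j y s)).
Proof.
  intros Hj Hex HW.
  apply is_derive_shift.
  pose proof (Derive_correct _ _ (Hex _ HW j Hj)) as D.
  eapply is_derive_ext; [|exact D]. intros t; simpl. rewrite upd_shift by exact Hj. reflexivity.
Qed.

Lemma mvt_step (g : quat -> R) (W : quat -> Prop) x r j y s1 :
  (j < 4)%nat ->
  (forall z, W z -> forall j, (j < 4)%nat -> ex_derive (fun t => g (qadd z (qscale t (ebasis j)))) 0) ->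
  (forall z, box r x z -> W z) ->
  box r x y -> Rabs (s1 - qc j x) < r ->
  exists xi, box r x xi /\ g (upd j y s1) - g y = pd j g xi * (s1 - qc j y).
Proof.
  intros Hj Hex HW Hy Hs1.
  pose proof (box_qc _ _ _ j Hy) as Hy0.
  assert (Hin : forall s, Rmin (qc j y) s1 <= s <= Rmax (qc j y) s1 -> box r x (upd j y s)).
  { intros s Hs. apply box_upd; auto.
    unfold Rmin, Rmax in Hs. destruct (Rle_dec (qc j y) s1);
    apply Rabs_def1; apply Rabs_def2 in Hy0; apply Rabs_def2 in Hs1; lra. }
  destruct (MVT_gen (fun u => g (upd j y u)) (qc j y) s1 (fun u => pd j g (upd j y u))) as [c [Hc E]].
  - intros u Hu. apply (partial_is_derive g W j y u Hj Hex). apply HW, Hin; lra.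
  - intros u Hu. apply continuity_pt_filterlim.
    apply (ex_derive_continuous (fun u => g (upd j y u))).
    eexists. apply (partial_is_derive g W j y u Hj Hex). apply HW, Hin; lra.
  - exists (upd j y c). split; [apply Hin; exact Hc|].
    rewrite <- E. rewrite upd_self. reflexivity.
Qed.

Lemma term_bound a b Q d e1 e2 :
  Rabs (a - b) < e1 -> Rabs (Q - d) < e2 -> e2 <= 1 -> 0 < e1 ->
  Rabs (a * Q - b * d) <= e1 * (Rabs d + 1) + Rabs b * e2.
Proof.
  intros H1 H2 H3 H4.
  replace (a * Q - b * d) with ((a - b) * Q + b * (Q - d)) by ring.
  eapply Rle_trans; [apply Rabs_triang|]. rewrite !Rabs_mult.
  assert (Rabs Q <= Rabs d + 1).
  { replace Q with ((Q - d) + d) by ring. eapply Rle_trans; [apply Rabs_triang|]. lra. }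
  pose proof (Rabs_pos (a-b)); pose proof (Rabs_pos Q); pose proof (Rabs_pos b); pose proof (Rabs_pos (Q-d)).
  apply Rplus_le_compat; [|apply Rmult_le_compat_l; lra].
  apply Rmult_le_compat; lra.
Qed.

Lemma box_qnorm r x z : box r x z -> qnorm (qsub z x) < 4 * r.
Proof.
  intros [H0 [H1 [H2 H3]]]. eapply Rle_lt_trans; [apply qnorm_le_sum|].
  unfold qsub, qadd, qscale; simpl.
  replace (q0 z + -1 * q0 x) with (q0 z - q0 x) by ring.
  replace (q1 z + -1 * q1 x) with (q1 z - q1 x) by ring.
  replace (q2 z + -1 * q2 x) with (q2 z - q2 x) by ring.
  replace (q3 z + -1 * q3 x) with (q3 z - q3 x) by ring. lra.
Qed.

Lemma quot_small y x h d e2 K :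
  h <> 0 -> Rabs ((y - x) / h - d) < e2 -> e2 <= 1 -> Rabs d + 1 <= K -> 0 < K ->
  forall r, 0 < r -> Rabs h < r / K -> Rabs (y - x) < r.
Proof.
  intros Hh H1 H2 H3 HK r Hr Hhr.
  assert (Rabs ((y - x)/h) <= K).
  { replace ((y-x)/h) with (((y-x)/h - d) + d) by ring.
    eapply Rle_trans; [apply Rabs_triang|]. lra. }
  replace (y - x) with ((y - x)/h * h) by (field; auto).
  rewrite Rabs_mult.
  assert (Rabs h * K < r).
  { apply (Rmult_lt_compat_r K) in Hhr; auto. unfold Rdiv in Hhr.
    rewrite Rmult_assoc, Rinv_l in Hhr by lra. lra. }
  pose proof (Rabs_pos h); pose proof (Rabs_pos ((y-x)/h)). nra.
Qed.

Definition Hex_on (g : quat -> R) (W : quat -> Prop) : Prop :=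
  forall z, W z -> forall j, (j < 4)%nat -> ex_derive (fun t => g (qadd z (qscale t (ebasis j)))) 0.

Lemma box_refl r x : 0 < r -> box r x x.
Proof. intros; unfold box; rewrite !Rminus_diag, Rabs_R0; lra. Qed.

Lemma chain_rule (g : quat -> R) (W : quat -> Prop) (c : R -> quat) t0 d0 d1 d2 d3 :
  open4 W -> Hex_on g W ->
  (forall j, (j < 4)%nat -> cont_at (pd j g) (c t0)) -> W (c t0) ->
  is_derive (fun t => q0 (c t)) t0 d0 -> is_derive (fun t => q1 (c t)) t0 d1 ->
  is_derive (fun t => q2 (c t)) t0 d2 -> is_derive (fun t => q3 (c t)) t0 d3 ->
  is_derive (fun t => g (c t)) t0
    (pd 0 g (c t0) * d0 + pd 1 g (c t0) * d1 + pd 2 g (c t0) * d2 + pd 3 g (c t0) * d3).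
Proof.
  intros HWo Hex Hct HWx D0 D1 D2 D3.
  apply is_derive_Reals. intros eps Heps.
  set (x := c t0) in *.
  destruct (HWo x HWx) as [r0 [Hr0 Hball]].
  set (K := 1 + Rabs d0 + Rabs d1 + Rabs d2 + Rabs d3).
  set (M := 1 + Rabs (pd 0 g x) + Rabs (pd 1 g x) + Rabs (pd 2 g x) + Rabs (pd 3 g x)).
  assert (HK : 1 <= K) by (unfold K; pose proof (Rabs_pos d0); pose proof (Rabs_pos d1);
     pose proof (Rabs_pos d2); pose proof (Rabs_pos d3); lra).
  assert (HM : 1 <= M) by (unfold M; pose proof (Rabs_pos (pd 0 g x)); pose proof (Rabs_pos (pd 1 g x));
     pose proof (Rabs_pos (pd 2 g x)); pose proof (Rabs_pos (pd 3 g x)); lra).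
  set (e1 := eps / (8 * K)). set (e2 := Rmin 1 (eps / (8 * M))).
  assert (He1 : 0 < e1) by (unfold e1; apply Rdiv_lt_0_compat; lra).
  assert (He2 : 0 < e2) by (unfold e2; apply Rmin_glb_lt; [lra| apply Rdiv_lt_0_compat; lra]).
  assert (He2' : e2 <= 1) by (unfold e2; apply Rmin_l).
  destruct (Hct 0%nat ltac:(lia) e1 He1) as [dl0 [Hdl0 C0]].
  destruct (Hct 1%nat ltac:(lia) e1 He1) as [dl1 [Hdl1 C1]].
  destruct (Hct 2%nat ltac:(lia) e1 He1) as [dl2 [Hdl2 C2]].
  destruct (Hct 3%nat ltac:(lia) e1 He1) as [dl3 [Hdl3 C3]].
  set (rho := Rmin (Rmin r0 dl0) (Rmin (Rmin dl1 dl2) dl3) / 4).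
  assert (Hrho : 0 < rho).
  { unfold rho. apply Rdiv_lt_0_compat; [|lra].
    repeat apply Rmin_glb_lt; auto. }
  assert (Hrho4 : 4 * rho <= r0 /\ 4 * rho <= dl0 /\ 4 * rho <= dl1 /\ 4 * rho <= dl2 /\ 4 * rho <= dl3).
  { unfold rho. replace (4 * (Rmin (Rmin r0 dl0) (Rmin (Rmin dl1 dl2) dl3) / 4))
      with (Rmin (Rmin r0 dl0) (Rmin (Rmin dl1 dl2) dl3)) by field.
    pose proof (Rmin_l (Rmin r0 dl0) (Rmin (Rmin dl1 dl2) dl3)).
    pose proof (Rmin_r (Rmin r0 dl0) (Rmin (Rmin dl1 dl2) dl3)).
    pose proof (Rmin_l r0 dl0). pose proof (Rmin_r r0 dl0).
    pose proof (Rmin_l (Rmin dl1 dl2) dl3). pose proof (Rmin_r (Rmin dl1 dl2) dl3).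
    pose proof (Rmin_l dl1 dl2). pose proof (Rmin_r dl1 dl2). lra. }
  assert (HW : forall z, box rho x z -> W z).
  { intros z Hz. apply Hball. pose proof (box_qnorm _ _ _ Hz). lra. }
  assert (HC : forall z, box rho x z ->
     Rabs (pd 0 g z - pd 0 g x) < e1 /\ Rabs (pd 1 g z - pd 1 g x) < e1 /\
     Rabs (pd 2 g z - pd 2 g x) < e1 /\ Rabs (pd 3 g z - pd 3 g x) < e1).
  { intros z Hz. pose proof (box_qnorm _ _ _ Hz).
    repeat split; [apply C0|apply C1|apply C2|apply C3]; lra. }
  apply is_derive_Reals in D0. apply is_derive_Reals in D1.
  apply is_derive_Reals in D2. apply is_derive_Reals in D3.
  destruct (D0 e2 He2) as [dd0 Hd0]. destruct (D1 e2 He2) as [dd1 Hd1].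
  destruct (D2 e2 He2) as [dd2 Hd2]. destruct (D3 e2 He2) as [dd3 Hd3].
  assert (Hpos : 0 < Rmin (Rmin (Rmin dd0 dd1) (Rmin dd2 dd3)) (rho / K)).
  { repeat apply Rmin_glb_lt; try apply cond_pos. apply Rdiv_lt_0_compat; lra. }
  exists (mkposreal _ Hpos). intros h Hh Hhd. simpl in Hhd.
  assert (Hh0 : Rabs h < dd0 /\ Rabs h < dd1 /\ Rabs h < dd2 /\ Rabs h < dd3 /\ Rabs h < rho / K).
  { pose proof (Rmin_l (Rmin (Rmin dd0 dd1) (Rmin dd2 dd3)) (rho / K)).
    pose proof (Rmin_r (Rmin (Rmin dd0 dd1) (Rmin dd2 dd3)) (rho / K)).
    pose proof (Rmin_l (Rmin dd0 dd1) (Rmin dd2 dd3)). pose proof (Rmin_r (Rmin dd0 dd1) (Rmin dd2 dd3)).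
    pose proof (Rmin_l dd0 dd1). pose proof (Rmin_r dd0 dd1).
    pose proof (Rmin_l dd2 dd3). pose proof (Rmin_r dd2 dd3). lra. }
  destruct Hh0 as [Ha0 [Ha1 [Ha2 [Ha3 Har]]]].
  specialize (Hd0 h Hh Ha0). specialize (Hd1 h Hh Ha1).
  specialize (Hd2 h Hh Ha2). specialize (Hd3 h Hh Ha3).
  simpl in Hd0, Hd1, Hd2, Hd3. change (c t0) with x in Hd0, Hd1, Hd2, Hd3.
  set (y0 := q0 (c (t0 + h))) in *. set (y1 := q1 (c (t0 + h))) in *.
  set (y2 := q2 (c (t0 + h))) in *. set (y3 := q3 (c (t0 + h))) in *.
  assert (S0 : Rabs (y0 - q0 x) < rho) by
    (apply (quot_small y0 (q0 x) h d0 e2 K); auto; unfold K;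
     pose proof (Rabs_pos d0); pose proof (Rabs_pos d1); pose proof (Rabs_pos d2); pose proof (Rabs_pos d3); lra).
  assert (S1 : Rabs (y1 - q1 x) < rho) by
    (apply (quot_small y1 (q1 x) h d1 e2 K); auto; unfold K;
     pose proof (Rabs_pos d0); pose proof (Rabs_pos d1); pose proof (Rabs_pos d2); pose proof (Rabs_pos d3); lra).
  assert (S2 : Rabs (y2 - q2 x) < rho) by
    (apply (quot_small y2 (q2 x) h d2 e2 K); auto; unfold K;
     pose proof (Rabs_pos d0); pose proof (Rabs_pos d1); pose proof (Rabs_pos d2); pose proof (Rabs_pos d3); lra).
  assert (S3' : Rabs (y3 - q3 x) < rho) by
    (apply (quot_small y3 (q3 x) h d3 e2 K); auto; unfold K;
     pose proof (Rabs_pos d0); pose proof (Rabs_pos d1); pose proof (Rabs_pos d2); pose proof (Rabs_pos d3); lra).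
  pose proof (box_refl _ x Hrho) as B0.
  destruct (mvt_step g W x rho 0 x y0 ltac:(lia) Hex HW B0 S0) as [xi0 [Bx0 E0]].
  set (P1 := upd 0 x y0) in *.
  assert (B1 : box rho x P1) by (apply box_upd; auto; lia).
  destruct (mvt_step g W x rho 1 P1 y1 ltac:(lia) Hex HW B1 S1) as [xi1 [Bx1 E1]].
  set (P2 := upd 1 P1 y1) in *.
  assert (B2 : box rho x P2) by (apply box_upd; auto; lia).
  destruct (mvt_step g W x rho 2 P2 y2 ltac:(lia) Hex HW B2 S2) as [xi2 [Bx2 E2]].
  set (P3 := upd 2 P2 y2) in *.
  assert (B3 : box rho x P3) by (apply box_upd; auto; lia).
  destruct (mvt_step g W x rho 3 P3 y3 ltac:(lia) Hex HW B3 S3') as [xi3 [Bx3 E3]].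
  assert (Eta : c (t0 + h) = upd 3 P3 y3).
  { unfold P3, P2, P1, y0, y1, y2, y3. destruct (c (t0 + h)); reflexivity. }
  rewrite Eta.
  replace (g (upd 3 P3 y3) - g x) with
    ((g (upd 3 P3 y3) - g P3) + (g P3 - g P2) + (g P2 - g P1) + (g P1 - g x)) by ring.
  rewrite E3, E2, E1, E0.
  unfold P3, P2, P1; simpl qc.
  destruct (HC _ Bx0) as [G0 _]. destruct (HC _ Bx1) as [_ [G1 _]].
  destruct (HC _ Bx2) as [_ [_ [G2 _]]]. destruct (HC _ Bx3) as [_ [_ [_ G3]]].
  set (Q0 := (y0 - q0 x) / h) in *. set (Q1 := (y1 - q1 x) / h) in *.
  set (Q2 := (y2 - q2 x) / h) in *. set (Q3 := (y3 - q3 x) / h) in *.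
  replace ((pd 3 g xi3 * (y3 - q3 x) + pd 2 g xi2 * (y2 - q2 x) + pd 1 g xi1 * (y1 - q1 x) +
      pd 0 g xi0 * (y0 - q0 x)) / h -
     (pd 0 g x * d0 + pd 1 g x * d1 + pd 2 g x * d2 + pd 3 g x * d3))
   with ((pd 0 g xi0 * Q0 - pd 0 g x * d0) + (pd 1 g xi1 * Q1 - pd 1 g x * d1)
         + (pd 2 g xi2 * Q2 - pd 2 g x * d2) + (pd 3 g xi3 * Q3 - pd 3 g x * d3))
   by (unfold Q0, Q1, Q2, Q3; field; auto).
  pose proof (term_bound _ _ _ _ _ _ G0 Hd0 He2' He1) as T0.
  pose proof (term_bound _ _ _ _ _ _ G1 Hd1 He2' He1) as T1.
  pose proof (term_bound _ _ _ _ _ _ G2 Hd2 He2' He1) as T2.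
  pose proof (term_bound _ _ _ _ _ _ G3 Hd3 He2' He1) as T3.
  eapply Rle_lt_trans. { eapply Rle_trans; [apply Rabs_triang|].
    apply Rplus_le_compat; [|exact T3].
    eapply Rle_trans; [apply Rabs_triang|].
    apply Rplus_le_compat; [|exact T2].
    eapply Rle_trans; [apply Rabs_triang|].
    apply Rplus_le_compat; [exact T0|exact T1]. }
  assert (E1K : e1 * (4 * K) = eps / 2) by (unfold e1; field; lra).
  assert (E2M : e2 * M <= eps / 8).
  { unfold e2. eapply Rle_trans. apply Rmult_le_compat_r; [lra| apply Rmin_r].
    right. field. lra. }
  assert (e1 * (Rabs d0 + 1) + Rabs (pd 0 g x) * e2 + (e1 * (Rabs d1 + 1) + Rabs (pd 1 g x) * e2) +
    (e1 * (Rabs d2 + 1) + Rabs (pd 2 g x) * e2) + (e1 * (Rabs d3 + 1) + Rabs (pd 3 g x) * e2)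
    <= e1 * (4 * K) + e2 * M).
  { replace (e1 * (Rabs d0 + 1) + Rabs (pd 0 g x) * e2 + (e1 * (Rabs d1 + 1) + Rabs (pd 1 g x) * e2) +
    (e1 * (Rabs d2 + 1) + Rabs (pd 2 g x) * e2) + (e1 * (Rabs d3 + 1) + Rabs (pd 3 g x) * e2))
     with (e1 * ((Rabs d0 + 1) + (Rabs d1 + 1) + (Rabs d2 + 1) + (Rabs d3 + 1))
           + e2 * (Rabs (pd 0 g x) + Rabs (pd 1 g x) + Rabs (pd 2 g x) + Rabs (pd 3 g x))) by ring.
    apply Rplus_le_compat; apply Rmult_le_compat_l; unfold K, M in *; lra. }
  lra.
Qed.

Lemma dmult f g x df dg : is_derive f x df -> is_derive g x dg ->
  is_derive (fun t => f t * g t) x (df * g x + f x * dg).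
Proof. intros H1 H2. apply (is_derive_mult f g x df dg H1 H2). intros; apply Rmult_comm. Qed.
Lemma dplus f g x df dg : is_derive f x df -> is_derive g x dg ->
  is_derive (fun t => f t + g t) x (df + dg).
Proof. intros H1 H2. apply (is_derive_plus f g x df dg H1 H2). Qed.
Lemma dopp f x df : is_derive f x df -> is_derive (fun t => - f t) x (- df).
Proof. intros H1. apply (is_derive_opp f x df H1). Qed.
Lemma dminus f g x df dg : is_derive f x df -> is_derive g x dg ->
  is_derive (fun t => f t - g t) x (df - dg).
Proof. intros H1 H2. apply (is_derive_minus f g x df dg H1 H2). Qed.
Lemma dconst (a x : R) : is_derive (fun _ => a) x 0.
Proof. apply (is_derive_const a x). Qed.
Lemma did (x : R) : is_derive (fun t => t) x 1.
Proof. apply (is_derive_id x). Qed.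

Lemma dplus' f g x df dg d : is_derive f x df -> is_derive g x dg -> df + dg = d ->
  is_derive (fun t => f t + g t) x d.
Proof. intros H1 H2 <-. apply dplus; auto. Qed.
Lemma dminus' f g x df dg d : is_derive f x df -> is_derive g x dg -> df - dg = d ->
  is_derive (fun t => f t - g t) x d.
Proof. intros H1 H2 <-. apply dminus; auto. Qed.
Lemma dmult' f g x df dg d : is_derive f x df -> is_derive g x dg -> df * g x + f x * dg = d ->
  is_derive (fun t => f t * g t) x d.
Proof. intros H1 H2 <-. apply dmult; auto. Qed.
Lemma dopp' f x df d : is_derive f x df -> - df = d ->
  is_derive (fun t => - f t) x d.
Proof. intros H1 <-. apply dopp; auto. Qed.
Lemma dconst' (a x d : R) : 0 = d -> is_derive (fun _ => a) x d.
Proof. intros <-. apply dconst. Qed.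

Lemma did' (x d : R) : 1 = d -> is_derive (fun t => t) x d.
Proof. intros <-. apply did. Qed.

Ltac dt := match goal with
 | |- is_derive (fun t => t) _ _ => apply did'; try reflexivity
 | |- is_derive (fun t => @?A t - @?B t) _ _ => eapply (dminus' A B); [dt | dt | try reflexivity]
 | |- is_derive (fun t => @?A t + @?B t) _ _ => eapply (dplus' A B); [dt | dt | try reflexivity]
 | |- is_derive (fun t => @?A t * @?B t) _ _ => eapply (dmult' A B); [dt | dt | try reflexivity]
 | |- is_derive (fun t => - @?A t) _ _ => eapply (dopp' A); [dt | try reflexivity]
 | |- is_derive (fun t => ?c) _ _ => apply (dconst' c); try reflexivity
 | |- _ => eassumption
 end.
Ltac ad_solve := dt.

Definition qderiv (c : R -> quat) (t0 : R) (L : quat) : Prop :=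
  is_derive (fun t => q0 (c t)) t0 (q0 L) /\ is_derive (fun t => q1 (c t)) t0 (q1 L) /\
  is_derive (fun t => q2 (c t)) t0 (q2 L) /\ is_derive (fun t => q3 (c t)) t0 (q3 L).

Lemma dQ_eq c L : qderiv c 0 L -> dQ c = L.
Proof.
  intros [H0 [H1 [H2 H3]]]. unfold dQ. destruct L; simpl in *.
  f_equal; apply is_derive_unique; assumption.
Qed.

Lemma qd_ext_loc c c' t0 L : locally t0 (fun t => c t = c' t) -> qderiv c t0 L -> qderiv c' t0 L.
Proof.
  intros Hl [H0 [H1 [H2 H3]]].
  split; [|split; [|split]]; (eapply is_derive_ext_loc; [|eassumption]);
  (eapply filter_imp; [|exact Hl]); intros t E; simpl; rewrite E; reflexivity.
Qed.

Lemma qd_ext c c' t0 L : (forall t, c t = c' t) -> qderiv c t0 L -> qderiv c' t0 L.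
Proof. intros E. apply qd_ext_loc. apply filter_forall. exact E. Qed.

Lemma qd_const a t0 : qderiv (fun _ => a) t0 qzero.
Proof. unfold qderiv; simpl; split; [|split; [|split]]; apply dconst. Qed.

Ltac qd_tac :=
  repeat match goal with H : qderiv _ _ _ |- _ => destruct H as [? [? [? ?]]] end;
  split; [|split; [|split]]; simpl; ad_solve; ring.

Lemma qd_add c1 c2 t0 L1 L2 : qderiv c1 t0 L1 -> qderiv c2 t0 L2 ->
  qderiv (fun t => qadd (c1 t) (c2 t)) t0 (qadd L1 L2).
Proof. intros; qd_tac. Qed.

Lemma qd_scale (s : R -> R) c t0 ds L : is_derive (fun t => s t) t0 ds -> qderiv c t0 L ->
  qderiv (fun t => qscale (s t) (c t)) t0 (qadd (qscale ds (c t0)) (qscale (s t0) L)).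
Proof. intros; qd_tac. Qed.

Lemma qd_sub c1 c2 t0 L1 L2 : qderiv c1 t0 L1 -> qderiv c2 t0 L2 ->
  qderiv (fun t => qsub (c1 t) (c2 t)) t0 (qsub L1 L2).
Proof. intros; qd_tac. Qed.

Lemma qd_mul c1 c2 t0 L1 L2 : qderiv c1 t0 L1 -> qderiv c2 t0 L2 ->
  qderiv (fun t => qmul (c1 t) (c2 t)) t0 (qadd (qmul L1 (c2 t0)) (qmul (c1 t0) L2)).
Proof. intros; qd_tac. Qed.

Lemma qd_conj c t0 L : qderiv c t0 L -> qderiv (fun t => qconj (c t)) t0 (qconj L).
Proof. intros; qd_tac. Qed.

Lemma rd_dot c1 c2 t0 L1 L2 : qderiv c1 t0 L1 -> qderiv c2 t0 L2 ->
  is_derive (fun t => qdot (c1 t) (c2 t)) t0 (qdot L1 (c2 t0) + qdot (c1 t0) L2).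
Proof.
  intros. repeat match goal with H : qderiv _ _ _ |- _ => destruct H as [? [? [? ?]]] end.
  unfold qdot. ad_solve. ring.
Qed.

Lemma qd_proj c1 c2 t0 L1 L2 : qderiv c1 t0 L1 -> qderiv c2 t0 L2 ->
  qderiv (fun t => proj (c1 t) (c2 t)) t0
    (qsub L2 (qadd (qscale (qdot L2 (c1 t0) + qdot (c2 t0) L1) (c1 t0))
                   (qscale (qdot (c2 t0) (c1 t0)) L1))).
Proof. intros.
  repeat match goal with H : qderiv _ _ _ |- _ => destruct H as [? [? [? ?]]] end;
  split; [|split; [|split]]; unfold proj, qdot; simpl; dt; ring. Qed.

Lemma qderiv_eq c t0 L L' : qderiv c t0 L -> L = L' -> qderiv c t0 L'.
Proof. intros H <-; exact H. Qed.

Lemma qd_line q w : qderiv (fun t => qadd q (qscale t w)) 0 w.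
Proof.
  split; [|split; [|split]]; simpl; dt; ring.
Qed.

Lemma nline_deriv q w : is_derive (fun t => qdot (qadd q (qscale t w)) (qadd q (qscale t w))) 0 (2 * qdot q w).
Proof.
  pose proof (rd_dot _ _ _ _ _ (qd_line q w) (qd_line q w)) as H.
  replace (2 * qdot q w) with (qdot w (qadd q (qscale 0 w)) + qdot (qadd q (qscale 0 w)) w)
    by (unfold qdot; simpl; ring).
  exact H.
Qed.

Lemma scurve_deriv q w : qdot q q = 1 ->
  qderiv (scurve q w) 0 (qsub w (qscale (qdot q w) q)).
Proof.
  intros Hq.
  set (n := fun t => qdot (qadd q (qscale t w)) (qadd q (qscale t w))).
  assert (Hn0 : n 0 = 1) by (unfold n; rewrite <- Hq; unfold qdot; simpl; ring).
  assert (Ds : is_derive (fun t => / sqrt (n t)) 0 (- qdot q w)).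
  { assert (D1 : is_derive (fun t => sqrt (n t)) 0 (2 * qdot q w / (2 * sqrt (n 0)))).
    { apply (is_derive_sqrt n). apply nline_deriv. lra. }
    assert (E : sqrt (n 0) = 1) by (rewrite Hn0; apply sqrt_1).
    pose proof (is_derive_inv _ _ _ D1) as D2. simpl in D2. rewrite !E in D2.
    replace (- qdot q w) with (- (2 * qdot q w / (2 * 1)) / (1 * (1 * 1))) by field.
    apply D2. lra. }
  pose proof (qd_scale (fun t => / sqrt (n t)) (fun t => qadd q (qscale t w)) 0 _ _ Ds (qd_line q w)) as H.
  eapply qd_ext; [|eapply qderiv_eq; [exact H|]].
  - intros t. reflexivity.
  - simpl. rewrite Hn0, sqrt_1. unfold qsub, qadd, qscale; simpl. f_equal; field.
Qed.

Lemma deriv_cont f t0 d : is_derive f t0 d -> forall eps, 0 < eps -> locally t0 (fun t => Rabs (f t - f t0) < eps).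
Proof.
  intros H eps He.
  assert (C : continuous f t0) by (apply ex_derive_continuous; eexists; exact H).
  apply (proj1 (filterlim_locally f (f t0)) C (mkposreal eps He)).
Qed.

Lemma qderiv_near c t0 L eps : qderiv c t0 L -> 0 < eps ->
  locally t0 (fun t => qnorm (qsub (c t) (c t0)) < eps).
Proof.
  intros [H0 [H1 [H2 H3]]] He.
  assert (He4 : 0 < eps / 4) by lra.
  pose proof (deriv_cont _ _ _ H0 _ He4) as C0.
  pose proof (deriv_cont _ _ _ H1 _ He4) as C1.
  pose proof (deriv_cont _ _ _ H2 _ He4) as C2.
  pose proof (deriv_cont _ _ _ H3 _ He4) as C3.
  generalize (filter_and _ _ (filter_and _ _ C0 C1) (filter_and _ _ C2 C3)).
  apply filter_imp. intros t [[A0 A1] [A2 A3]]. simpl in *.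
  eapply Rle_lt_trans; [apply qnorm_le_sum|].
  unfold qsub, qadd, qscale; simpl.
  replace (q0 (c t) + -1 * q0 (c t0)) with (q0 (c t) - q0 (c t0)) by ring.
  replace (q1 (c t) + -1 * q1 (c t0)) with (q1 (c t) - q1 (c t0)) by ring.
  replace (q2 (c t) + -1 * q2 (c t0)) with (q2 (c t) - q2 (c t0)) by ring.
  replace (q3 (c t) + -1 * q3 (c t0)) with (q3 (c t) - q3 (c t0)) by ring.
  lra.
Qed.

Lemma qdot_scale_scale s x : qdot (qscale s x) (qscale s x) = s * s * qdot x x.
Proof. unfold qdot, qscale; simpl; ring. Qed.

Lemma scurve_S3 q w t : 0 < qdot (qadd q (qscale t w)) (qadd q (qscale t w)) -> S3 (scurve q w t).
Proof.
  intros Hp. unfold S3, scurve. rewrite qdot_scale_scale. unfold qnorm.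
  set (n := qdot (qadd q (qscale t w)) (qadd q (qscale t w))) in *.
  assert (sqrt n * sqrt n = n) by (apply sqrt_sqrt; lra).
  assert (0 < sqrt n) by (apply sqrt_lt_R0; lra).
  replace (/ sqrt n * / sqrt n * n) with (n / (sqrt n * sqrt n)) by (field; lra).
  rewrite H. field. lra.
Qed.

Lemma scurve0 q w : qdot q q = 1 -> scurve q w 0 = q.
Proof.
  intros Hq. unfold scurve, qnorm.
  replace (qadd q (qscale 0 w)) with q by (destruct q; unfold qadd, qscale; simpl; f_equal; ring).
  rewrite Hq, sqrt_1. destruct q; unfold qscale; simpl; f_equal; field.
Qed.

Lemma scurve_in_V V q w : open_in_S3 V -> V q -> locally 0 (fun t => V (scurve q w t)).
Proof.
  intros [HS HO] Hq.
  pose proof (HS q Hq) as Hq1. unfold S3 in Hq1.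
  destruct (HO q Hq) as [eps [He Hb]].
  pose proof (qderiv_near _ _ _ _ (scurve_deriv q w Hq1) He) as N1.
  pose proof (deriv_cont _ _ _ (nline_deriv q w) (1/2) ltac:(lra)) as N2.
  generalize (filter_and _ _ N1 N2). apply filter_imp. intros t [A B].
  rewrite scurve0 in A by exact Hq1.
  apply Hb; [|exact A].
  apply scurve_S3.
  replace (qadd q (qscale 0 w)) with q in B by (destruct q; unfold qadd, qscale; simpl; f_equal; ring).
  rewrite Hq1 in B. apply Rabs_def2 in B. lra.
Qed.

Lemma pder_app ks ls g x : pder ks (pder ls g) x = pder (ks ++ ls) g x.
Proof.
  revert x. induction ks as [|k ks IH]; intros x; simpl; [reflexivity|].
  apply Derive_ext. intros t. apply IH.
Qed.

Lemma cont_at_ext f g x : (forall y, f y = g y) -> cont_at f x -> cont_at g x.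
Proof.
  intros E H eps He. destruct (H eps He) as [d [Hd Hb]]. exists d; split; auto.
  intros y Hy. rewrite <- !E. auto.
Qed.

Lemma smooth_pd W g j : smooth_on W g -> smooth_on W (pd j g).
Proof.
  intros Hs ks x Hx. destruct (Hs (ks ++ j :: nil) x Hx) as [C D]. split.
  - eapply cont_at_ext; [|exact C]. intros y. symmetry. apply (pder_app ks (j :: nil)).
  - intros k Hk. eapply ex_derive_ext; [|apply (D k Hk)]. intros t. simpl.
    symmetry. apply (pder_app ks (j :: nil)).
Qed.

Definition gradv (g : quat -> R) (x v : quat) : R :=
  pd 0 g x * q0 v + pd 1 g x * q1 v + pd 2 g x * q2 v + pd 3 g x * q3 v.

Lemma chain_smooth g W c t0 L : open4 W -> smooth_on W g -> W (c t0) -> qderiv c t0 L ->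
  is_derive (fun t => g (c t)) t0 (gradv g (c t0) L).
Proof.
  intros Ho Hs Hc [D0 [D1 [D2 D3]]].
  apply (chain_rule g W c t0); auto.
  - intros z Hz j Hj. apply (proj2 (Hs nil z Hz) j Hj).
  - intros j Hj. apply (proj1 (Hs (j :: nil) (c t0) Hc)).
Qed.

Definition gradv2 (g : quat -> R) (x L v : quat) : R :=
  gradv (pd 0 g) x L * q0 v + gradv (pd 1 g) x L * q1 v +
  gradv (pd 2 g) x L * q2 v + gradv (pd 3 g) x L * q3 v.

Lemma gradv_deriv g W c m t0 L M : open4 W -> smooth_on W g -> W (c t0) ->
  qderiv c t0 L -> qderiv m t0 M ->
  is_derive (fun t => gradv g (c t) (m t)) t0 (gradv2 g (c t0) L (m t0) + gradv g (c t0) M).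
Proof.
  intros Ho Hs Hc HL HM.
  pose proof (chain_smooth _ _ _ _ _ Ho (smooth_pd W g 0 Hs) Hc HL).
  pose proof (chain_smooth _ _ _ _ _ Ho (smooth_pd W g 1 Hs) Hc HL).
  pose proof (chain_smooth _ _ _ _ _ Ho (smooth_pd W g 2 Hs) Hc HL).
  pose proof (chain_smooth _ _ _ _ _ Ho (smooth_pd W g 3 Hs) Hc HL).
  destruct HM as [M0 [M1 [M2 M3]]].
  unfold gradv at 1. dt. unfold gradv2, gradv. ring.
Qed.

Definition smoothQ (W : quat -> Prop) (G : quat -> quat) : Prop :=
  smooth_on W (fun x => q0 (G x)) /\ smooth_on W (fun x => q1 (G x)) /\
  smooth_on W (fun x => q2 (G x)) /\ smooth_on W (fun x => q3 (G x)).

Definition DG (G : quat -> quat) (x v : quat) : quat :=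
  mkQ (gradv (fun y => q0 (G y)) x v) (gradv (fun y => q1 (G y)) x v)
      (gradv (fun y => q2 (G y)) x v) (gradv (fun y => q3 (G y)) x v).

Definition D2G (G : quat -> quat) (x L v : quat) : quat :=
  mkQ (gradv2 (fun y => q0 (G y)) x L v) (gradv2 (fun y => q1 (G y)) x L v)
      (gradv2 (fun y => q2 (G y)) x L v) (gradv2 (fun y => q3 (G y)) x L v).

Lemma qchain G W c t0 L : open4 W -> smoothQ W G -> W (c t0) -> qderiv c t0 L ->
  qderiv (fun t => G (c t)) t0 (DG G (c t0) L).
Proof.
  intros Ho [S0 [S1 [S2 S3']]] Hc HL.
  split; [|split; [|split]]; simpl;
  [apply (chain_smooth (fun y => q0 (G y)) W c t0 L)|apply (chain_smooth (fun y => q1 (G y)) W c t0 L)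
  |apply (chain_smooth (fun y => q2 (G y)) W c t0 L)|apply (chain_smooth (fun y => q3 (G y)) W c t0 L)]; auto.
Qed.

Lemma DG_deriv G W c m t0 L M : open4 W -> smoothQ W G -> W (c t0) ->
  qderiv c t0 L -> qderiv m t0 M ->
  qderiv (fun t => DG G (c t) (m t)) t0 (qadd (D2G G (c t0) L (m t0)) (DG G (c t0) M)).
Proof.
  intros Ho [S0 [S1 [S2 S3']]] Hc HL HM.
  split; [|split; [|split]]; simpl;
  [apply (gradv_deriv (fun y => q0 (G y)) W c m t0 L M)|apply (gradv_deriv (fun y => q1 (G y)) W c m t0 L M)
  |apply (gradv_deriv (fun y => q2 (G y)) W c m t0 L M)|apply (gradv_deriv (fun y => q3 (G y)) W c m t0 L M)]; auto.
Qed.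

Lemma DG_lin G x u v a b : DG G x (qadd (qscale a u) (qscale b v)) =
  qadd (qscale a (DG G x u)) (qscale b (DG G x v)).
Proof. unfold DG, gradv, qadd, qscale; simpl; f_equal; ring. Qed.

Lemma qmul_tangent q e : q0 e = 0 -> qdot q (qmul q e) = 0.
Proof. intros He. destruct q, e; unfold qdot, qmul; simpl in *. subst. ring. Qed.

Lemma qsub_zero_scale w q : qsub w (qscale 0 q) = w.
Proof. destruct w; unfold qsub, qadd, qscale; simpl; f_equal; ring. Qed.

Lemma scurve_tangent q w : qdot q q = 1 -> qdot q w = 0 -> qderiv (scurve q w) 0 w.
Proof. intros H1 H2. eapply qderiv_eq; [apply scurve_deriv; exact H1|]. rewrite H2. apply qsub_zero_scale. Qed.

Lemma scurve_zero p t : qdot p p = 1 -> scurve p qzero t = p.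
Proof.
  intros Hp. unfold scurve, qnorm.
  replace (qadd p (qscale t qzero)) with p by (destruct p; unfold qadd, qscale, qzero; simpl; f_equal; ring).
  rewrite Hp, sqrt_1. destruct p; unfold qscale; simpl; f_equal; field.
Qed.

Lemma dmap_zero X p : qdot p p = 1 -> dmap X p qzero = qzero.
Proof.
  intros Hp. unfold dmap. apply dQ_eq.
  eapply qd_ext; [|apply (qd_const (X p))]. intros t; simpl. rewrite scurve_zero; auto.
Qed.

Lemma deriv_loc_const (F : R -> R) a d : locally 0 (fun t => F t = a) -> is_derive F 0 d -> d = 0.
Proof.
  intros Hl Hd.
  assert (H2 : is_derive F 0 0).
  { eapply is_derive_ext_loc; [|apply (dconst a 0)].
    eapply filter_imp; [|exact Hl]. intros t E; simpl; auto. }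
  rewrite <- (is_derive_unique _ _ _ Hd). apply is_derive_unique; exact H2.
Qed.

Section Anal.
Variables (V : quat -> Prop) (zeta : quat -> quat) (W : quat -> Prop) (Gq : quat -> quat).
Hypotheses (HVo : open_in_S3 V) (HWo : open4 W) (HVW : forall p, V p -> W p)
  (HGs : smoothQ W Gq) (HGz : forall p, V p -> Gq p = zeta p)
  (Hut : unit_tangent_field V zeta).

Lemma VS3 p : V p -> qdot p p = 1.
Proof. intros Hp. exact (proj1 HVo p Hp). Qed.

Lemma loc_V q w : V q -> locally 0 (fun t => V (scurve q w t)).
Proof. intros Hq. apply scurve_in_V; auto. Qed.

Lemma G_along q w : V q -> qdot q w = 0 ->
  qderiv (fun t => Gq (scurve q w t)) 0 (DG Gq q w).
Proof.
  intros Hq Hw. pose proof (VS3 q Hq) as Hq1.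
  pose proof (qchain Gq W (scurve q w) 0 w HWo HGs) as K.
  replace (scurve q w 0) with q in K by (symmetry; apply scurve0; exact Hq1). apply K; auto. apply scurve_tangent; auto.
Qed.

Lemma dmap_zeta q w : V q -> qdot q w = 0 -> dmap zeta q w = DG Gq q w.
Proof.
  intros Hq Hw. unfold dmap. apply dQ_eq.
  eapply qd_ext_loc; [|apply G_along; auto].
  eapply filter_imp; [|apply (loc_V q w Hq)]. intros t Ht. simpl. apply HGz; auto.
Qed.

Lemma dmap_f q w : V q -> qdot q w = 0 ->
  dmap (fun p => qmul (qconj p) (zeta p)) q w =
  qadd (qmul (qconj w) (Gq q)) (qmul (qconj q) (DG Gq q w)).
Proof.
  intros Hq Hw. pose proof (VS3 q Hq) as Hq1. unfold dmap. apply dQ_eq.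
  pose proof (qd_mul _ _ _ _ _ (qd_conj _ _ _ (scurve_tangent q w Hq1 Hw)) (G_along q w Hq Hw)) as K.
  cbv beta in K.   rewrite scurve0 in K by exact Hq1.
  eapply qd_ext_loc; [|exact K].
  eapply filter_imp; [|apply (loc_V q w Hq)]. intros t Ht. simpl. rewrite HGz; auto.
Qed.

Lemma unit_G q : V q -> qdot (Gq q) (Gq q) = 1 /\ qdot (Gq q) q = 0.
Proof. intros Hq. rewrite HGz by auto. destruct (Hut q Hq); auto. Qed.

Lemma I1 q w : V q -> qdot q w = 0 -> qdot (Gq q) (DG Gq q w) = 0.
Proof.
  intros Hq Hw. pose proof (VS3 q Hq) as Hq1.
  pose proof (rd_dot _ _ _ _ _ (G_along q w Hq Hw) (G_along q w Hq Hw)) as D.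
  cbv beta in D. rewrite scurve0 in D by exact Hq1.
  assert (E := deriv_loc_const _ 1 _ ltac:(eapply filter_imp; [|apply (loc_V q w Hq)];
     intros t Ht; apply (proj1 (unit_G _ Ht))) D).
  unfold qdot in *. lra.
Qed.

Lemma I2 q w : V q -> qdot q w = 0 -> qdot (DG Gq q w) q + qdot (Gq q) w = 0.
Proof.
  intros Hq Hw. pose proof (VS3 q Hq) as Hq1.
  pose proof (rd_dot _ _ _ _ _ (G_along q w Hq Hw) (scurve_tangent q w Hq1 Hw)) as D.
  cbv beta in D. rewrite scurve0 in D by exact Hq1.
  exact (deriv_loc_const _ 0 _ ltac:(eapply filter_imp; [|apply (loc_V q w Hq)];
     intros t Ht; apply (proj2 (unit_G _ Ht))) D).
Qed.


Definition Aval p e := DG Gq p (qmul p e).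
Definition Bval p e := qadd (D2G Gq p (qmul p e) (qmul p e)) (DG Gq p (qmul (qmul p e) e)).

Lemma c_deriv p e : V p -> q0 e = 0 -> qderiv (scurve p (qmul p e)) 0 (qmul p e).
Proof. intros Hp He. apply scurve_tangent. apply VS3; auto. apply qmul_tangent; auto. Qed.

Lemma frame_deriv p e : V p -> q0 e = 0 ->
  qderiv (fun t => qmul (scurve p (qmul p e) t) e) 0 (qmul (qmul p e) e).
Proof.
  intros Hp He. eapply qderiv_eq; [apply qd_mul; [apply c_deriv; auto| apply qd_const]|].
  destruct p, e; unfold qadd, qmul, qzero; simpl; f_equal; ring.
Qed.

Lemma B_along p e : V p -> q0 e = 0 ->
  qderiv (fun t => DG Gq (scurve p (qmul p e) t) (qmul (scurve p (qmul p e) t) e)) 0 (Bval p e).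
Proof.
  intros Hp He. pose proof (VS3 p Hp) as Hp1.
  pose proof (DG_deriv Gq W (scurve p (qmul p e)) (fun t => qmul (scurve p (qmul p e) t) e) 0 (qmul p e) (qmul (qmul p e) e)
     HWo HGs) as K.
  cbv beta in K. rewrite scurve0 in K by exact Hp1.
  apply K; auto. apply c_deriv; auto. apply frame_deriv; auto.
Qed.

Lemma loc_c p e : V p -> locally 0 (fun t => V (scurve p (qmul p e) t)).
Proof. intros; apply loc_V; auto. Qed.

Lemma hess_piece p e : V p -> q0 e = 0 ->
  dmap (fun q => dmap (fun p => qmul (qconj p) (zeta p)) q (qmul q e)) p (qmul p e) =
  qadd (qadd (qmul (qconj (qmul (qmul p e) e)) (Gq p)) (qmul (qconj (qmul p e)) (Aval p e)))
       (qadd (qmul (qconj (qmul p e)) (Aval p e)) (qmul (qconj p) (Bval p e))).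
Proof.
  intros Hp He. pose proof (VS3 p Hp) as Hp1. unfold dmap at 1. apply dQ_eq.
  pose proof (qd_add _ _ _ _ _
    (qd_mul _ _ _ _ _ (qd_conj _ _ _ (frame_deriv p e Hp He)) (G_along p (qmul p e) Hp (qmul_tangent p e He)))
    (qd_mul _ _ _ _ _ (qd_conj _ _ _ (c_deriv p e Hp He)) (B_along p e Hp He))) as K.
  cbv beta in K. rewrite scurve0 in K by exact Hp1.
  eapply qd_ext_loc; [|exact K].
  eapply filter_imp; [|apply (loc_c p e Hp)]. intros t Ht. simpl.
  rewrite dmap_f; auto. apply qmul_tangent; auto.
Qed.

Lemma nab_piece p e : V p -> q0 e = 0 ->
  dmap (fun q => nabla zeta q (qmul q e)) p (qmul p e) =
  qsub (Bval p e) (qadd (qscale (qdot (Bval p e) p + qdot (Aval p e) (qmul p e)) p)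
                        (qscale (qdot (Aval p e) p) (qmul p e))).
Proof.
  intros Hp He. pose proof (VS3 p Hp) as Hp1. unfold dmap at 1. apply dQ_eq.
  pose proof (qd_proj _ _ _ _ _ (c_deriv p e Hp He) (B_along p e Hp He)) as K.
  cbv beta in K. rewrite scurve0 in K by exact Hp1.
  eapply qd_ext_loc; [|exact K].
  eapply filter_imp; [|apply (loc_c p e Hp)]. intros t Ht. simpl.
  unfold nabla. rewrite dmap_zeta; auto. apply qmul_tangent; auto.
Qed.

Lemma nabla_zeta_frame p e : V p -> q0 e = 0 ->
  nabla zeta p (qmul p e) = proj p (Aval p e).
Proof. intros Hp He. unfold nabla. rewrite dmap_zeta; auto. apply qmul_tangent; auto. Qed.

Lemma dmap_f_frame p e : V p -> q0 e = 0 ->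
  dmap (fun p => qmul (qconj p) (zeta p)) p (qmul p e) =
  qadd (qmul (qconj (qmul p e)) (Gq p)) (qmul (qconj p) (Aval p e)).
Proof. intros Hp He. apply dmap_f; auto. apply qmul_tangent; auto. Qed.


Lemma F4a p e : V p -> q0 e = 0 ->
  qdot (Aval p e) (Aval p e) + qdot (Gq p) (Bval p e) = 0.
Proof.
  intros Hp He. pose proof (VS3 p Hp) as Hp1.
  pose proof (rd_dot _ _ _ _ _ (G_along p (qmul p e) Hp (qmul_tangent p e He)) (B_along p e Hp He)) as D.
  cbv beta in D. rewrite scurve0 in D by exact Hp1.
  eapply deriv_loc_const; [|exact D].
  eapply filter_imp; [|apply (loc_c p e Hp)]. intros t Ht.
  apply I1; auto. apply qmul_tangent; auto.
Qed.

Lemma F4b p e : V p -> q0 e = 0 ->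
  qdot (Bval p e) p + qdot (Aval p e) (qmul p e) + (qdot (Aval p e) (qmul p e) + qdot (Gq p) (qmul (qmul p e) e)) = 0.
Proof.
  intros Hp He. pose proof (VS3 p Hp) as Hp1.
  pose proof (rd_dot _ _ _ _ _ (B_along p e Hp He) (c_deriv p e Hp He)) as D1.
  pose proof (rd_dot _ _ _ _ _ (G_along p (qmul p e) Hp (qmul_tangent p e He)) (frame_deriv p e Hp He)) as D2.
  pose proof (dplus _ _ _ _ _ D1 D2) as D.
  cbv beta in D. rewrite !scurve0 in D by exact Hp1.
  eapply deriv_loc_const; [|exact D].
  eapply filter_imp; [|apply (loc_c p e Hp)]. intros t Ht.
  apply I2; auto. apply qmul_tangent; auto.
Qed.

Lemma frame_nabla_zero p e : V p -> q0 e = 0 -> qdot e e = 1 ->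
  nabla (fun q => qmul q e) p (qmul p e) = qzero.
Proof.
  intros Hp He He1. pose proof (VS3 p Hp) as Hp1. unfold nabla, dmap.
  rewrite (dQ_eq _ _ (frame_deriv p e Hp He)).
  assert (E : qmul (qmul p e) e = qscale (-1) p).
  { destruct p as [p0 p1 p2 p3], e as [e0 e1 e2 e3]; unfold qdot in *; simpl in *; subst e0.
    unfold qmul, qscale; simpl. f_equal.
    - transitivity (- p0 * (0 * 0 + e1 * e1 + e2 * e2 + e3 * e3)); [ring| rewrite He1; ring].
    - transitivity (- p1 * (0 * 0 + e1 * e1 + e2 * e2 + e3 * e3)); [ring| rewrite He1; ring].
    - transitivity (- p2 * (0 * 0 + e1 * e1 + e2 * e2 + e3 * e3)); [ring| rewrite He1; ring].
    - transitivity (- p3 * (0 * 0 + e1 * e1 + e2 * e2 + e3 * e3)); [ring| rewrite He1; ring]. }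
  rewrite E.
  destruct p as [p0 p1 p2 p3]; unfold qdot in *; simpl in *.
  unfold proj, qsub, qadd, qscale, qdot, qzero; simpl.
  f_equal.
  - transitivity (- p0 + p0 * (p0 * p0 + p1 * p1 + p2 * p2 + p3 * p3)); [ring| rewrite Hp1; ring].
  - transitivity (- p1 + p1 * (p0 * p0 + p1 * p1 + p2 * p2 + p3 * p3)); [ring| rewrite Hp1; ring].
  - transitivity (- p2 + p2 * (p0 * p0 + p1 * p1 + p2 * p2 + p3 * p3)); [ring| rewrite Hp1; ring].
  - transitivity (- p3 + p3 * (p0 * p0 + p1 * p1 + p2 * p2 + p3 * p3)); [ring| rewrite Hp1; ring].
Qed.

Lemma gc_deriv x y : qderiv (gcircle x y) 0 y.
Proof.
  split; [|split; [|split]]; unfold gcircle; simpl;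
  (eapply is_derive_ext; [intros t; reflexivity|]);
  auto_derive; auto; rewrite sin_0, cos_0; ring.
Qed.

Hypotheses (Hgeo : geodesic_field V zeta) (Hsat : saturated V zeta).

Lemma geo_DG p : V p -> DG Gq p (Gq p) = qscale (-1) p.
Proof.
  intros Hp.
  assert (E0 : gcircle p (zeta p) 0 = p).
  { unfold gcircle. rewrite cos_0, sin_0. destruct p; unfold qadd, qscale; simpl; f_equal; ring. }
  pose proof (qchain Gq W (gcircle p (zeta p)) 0 (zeta p) HWo HGs) as K.
  rewrite E0 in K. specialize (K (HVW p Hp) (gc_deriv _ _)).
  assert (K2 : qderiv (fun t => qadd (qscale (- sin t) p) (qscale (cos t) (zeta p))) 0 (qscale (-1) p)).
  { split; [|split; [|split]]; simpl; auto_derive; auto; rewrite sin_0, cos_0; ring. }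
  rewrite HGz by auto.
  rewrite <- (dQ_eq _ _ K), <- (dQ_eq _ _ K2). unfold dQ. f_equal; apply Derive_ext; intros t;
  rewrite HGz by (apply Hsat; auto); rewrite Hgeo; auto.
Qed.

End Anal.

Definition qone := mkQ 1 0 0 0.
Definition T1 f e u b := qadd (qadd (qmul (qconj (qmul e e)) f) (qmul (qconj e) u)) (qadd (qmul (qconj e) u) b).
Definition LHS1 f u1 u2 u3 b1 b2 b3 :=
  qadd (proj f (T1 f qi u1 b1)) (qadd (proj f (T1 f qj u2 b2)) (proj f (T1 f qk u3 b3))).
Definition NB1 e u b := qsub b (qadd (qscale (q0 b + qdot u e) qone) (qscale (q0 u) e)).
Definition RHS1 f u1 u2 u3 b1 b2 b3 :=
  qadd (qadd (proj qone (NB1 qi u1 b1)) (qadd (proj qone (NB1 qj u2 b2)) (proj qone (NB1 qk u3 b3))))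
       (qscale (qdot (proj qone u1) (proj qone u1) + qdot (proj qone u2) (proj qone u2)
                + qdot (proj qone u3) (proj qone u3)) f).

Lemma qadd_mk a0 a1 a2 a3 b0 b1 b2 b3 :
  qadd (mkQ a0 a1 a2 a3) (mkQ b0 b1 b2 b3) = mkQ (a0 + b0) (a1 + b1) (a2 + b2) (a3 + b3).
Proof. reflexivity. Qed.
Lemma qscale_mk s a0 a1 a2 a3 : qscale s (mkQ a0 a1 a2 a3) = mkQ (s * a0) (s * a1) (s * a2) (s * a3).
Proof. reflexivity. Qed.
Lemma qsub_mk a0 a1 a2 a3 b0 b1 b2 b3 :
  qsub (mkQ a0 a1 a2 a3) (mkQ b0 b1 b2 b3) = mkQ (a0 - b0) (a1 - b1) (a2 - b2) (a3 - b3).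
Proof. unfold qsub, qadd, qscale; simpl; f_equal; ring. Qed.
Lemma qconj_mk a0 a1 a2 a3 : qconj (mkQ a0 a1 a2 a3) = mkQ a0 (- a1) (- a2) (- a3).
Proof. reflexivity. Qed.
Lemma qmul_mk a0 a1 a2 a3 b0 b1 b2 b3 :
  qmul (mkQ a0 a1 a2 a3) (mkQ b0 b1 b2 b3) =
  mkQ (a0 * b0 - a1 * b1 - a2 * b2 - a3 * b3) (a0 * b1 + a1 * b0 + a2 * b3 - a3 * b2)
      (a0 * b2 - a1 * b3 + a2 * b0 + a3 * b1) (a0 * b3 + a1 * b2 - a2 * b1 + a3 * b0).
Proof. reflexivity. Qed.
Lemma qdot_mk a0 a1 a2 a3 b0 b1 b2 b3 :
  qdot (mkQ a0 a1 a2 a3) (mkQ b0 b1 b2 b3) = a0 * b0 + a1 * b1 + a2 * b2 + a3 * b3.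
Proof. reflexivity. Qed.
Lemma q0_mk a0 a1 a2 a3 : q0 (mkQ a0 a1 a2 a3) = a0. Proof. reflexivity. Qed.
Lemma proj_mk n w : proj n w = qsub w (qscale (qdot w n) n).
Proof. reflexivity. Qed.

Ltac qeval := repeat progress (rewrite ?qadd_mk, ?qscale_mk, ?qsub_mk, ?qconj_mk, ?qmul_mk, ?qdot_mk, ?q0_mk).

Lemma ALG1 f u1 u2 u3 b1 b2 b3 :
  q0 f = 0 -> qdot f f = 1 ->
  qdot f u1 = 0 -> qdot f u2 = 0 -> qdot f u3 = 0 ->
  q0 u1 + qdot f qi = 0 -> q0 u2 + qdot f qj = 0 -> q0 u3 + qdot f qk = 0 ->
  qdot u1 u1 + qdot f b1 = 0 -> qdot u2 u2 + qdot f b2 = 0 -> qdot u3 u3 + qdot f b3 = 0 ->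
  q0 b1 + qdot u1 qi + (qdot u1 qi + qdot f (qmul qi qi)) = 0 ->
  q0 b2 + qdot u2 qj + (qdot u2 qj + qdot f (qmul qj qj)) = 0 ->
  q0 b3 + qdot u3 qk + (qdot u3 qk + qdot f (qmul qk qk)) = 0 ->
  qadd (qscale (qdot f qi) u1) (qadd (qscale (qdot f qj) u2) (qscale (qdot f qk) u3)) = qscale (-1) qone ->
  LHS1 f u1 u2 u3 b1 b2 b3 = RHS1 f u1 u2 u3 b1 b2 b3.
Proof.
  destruct f as [f0 f1 f2 f3], u1 as [a0 a1 a2 a3], u2 as [c0 c1 c2 c3], u3 as [d0 d1 d2 d3],
    b1 as [x0 x1 x2 x3], b2 as [y0 y1 y2 y3], b3 as [z0 z1 z2 z3].
  unfold LHS1, RHS1, T1, NB1, qone, qi, qj, qk. rewrite !proj_mk.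
  qeval. simpl q0.
  intros Hf0 Hff Hv1 Hv2 Hv3 Ha0 Hc0 Hd0 Hb1 Hb2 Hb3 Hx0 Hy0 Hz0 Hs.
  injection Hs; intros Hs3 Hs2 Hs1 Hs0.
  subst f0.
  assert (Ea0 : a0 = - f1) by lra. assert (Ec0 : c0 = - f2) by lra. assert (Ed0 : d0 = - f3) by lra.
  subst a0 c0 d0.
  assert (Ex0 : x0 = - 2 * a1) by lra. assert (Ey0 : y0 = - 2 * c2) by lra. assert (Ez0 : z0 = - 2 * d3) by lra.
  subst x0 y0 z0.
  set (cf := f1 * f1 + f2 * f2 + f3 * f3 - 1).
  assert (Hcf : cf = 0) by (unfold cf; lra).
  set (cv1 := f1 * a1 + f2 * a2 + f3 * a3). assert (Hcv1 : cv1 = 0) by (unfold cv1; lra).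
  set (cv2 := f1 * c1 + f2 * c2 + f3 * c3). assert (Hcv2 : cv2 = 0) by (unfold cv2; lra).
  set (cv3 := f1 * d1 + f2 * d2 + f3 * d3). assert (Hcv3 : cv3 = 0) by (unfold cv3; lra).
  set (cs1 := f1 * a1 + f2 * c1 + f3 * d1). assert (Hcs1 : cs1 = 0) by (unfold cs1; lra).
  set (cs2 := f1 * a2 + f2 * c2 + f3 * d2). assert (Hcs2 : cs2 = 0) by (unfold cs2; lra).
  set (cs3 := f1 * a3 + f2 * c3 + f3 * d3). assert (Hcs3 : cs3 = 0) by (unfold cs3; lra).
  set (cb := (- f1 * - f1 + a1 * a1 + a2 * a2 + a3 * a3 + (0 * (-2 * a1) + f1 * x1 + f2 * x2 + f3 * x3))
           + (- f2 * - f2 + c1 * c1 + c2 * c2 + c3 * c3 + (0 * (-2 * c2) + f1 * y1 + f2 * y2 + f3 * y3))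
           + (- f3 * - f3 + d1 * d1 + d2 * d2 + d3 * d3 + (0 * (-2 * d3) + f1 * z1 + f2 * z2 + f3 * z3))).
  assert (Hcb : cb = 0) by (unfold cb; lra).
  set (w1 := c3 - d2). set (w2 := d1 - a3). set (w3 := a2 - c1).
  set (K1 := cv1 - cs1). set (K2 := cv2 - cs2). set (K3 := cv3 - cs3).
  f_equal.
  - ring.
  - match goal with |- ?L = ?R =>
      assert (E : L - R = f1 * (2 * cf - cb) + 2 * ((f2 * K3 - f3 * K2) + cf * w1)) by
        (unfold cf, cb, K1, K2, K3, cv1, cv2, cv3, cs1, cs2, cs3, w1, w2, w3; ring) end.
    unfold K2, K3 in E. rewrite Hcf, Hcb, Hcv2, Hcv3, Hcs2, Hcs3 in E. lra.
  - match goal with |- ?L = ?R =>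
      assert (E : L - R = f2 * (2 * cf - cb) + 2 * ((f3 * K1 - f1 * K3) + cf * w2)) by
        (unfold cf, cb, K1, K2, K3, cv1, cv2, cv3, cs1, cs2, cs3, w1, w2, w3; ring) end.
    unfold K1, K3 in E. rewrite Hcf, Hcb, Hcv1, Hcv3, Hcs1, Hcs3 in E. lra.
  - match goal with |- ?L = ?R =>
      assert (E : L - R = f3 * (2 * cf - cb) + 2 * ((f1 * K2 - f2 * K1) + cf * w3)) by
        (unfold cf, cb, K1, K2, K3, cv1, cv2, cv3, cs1, cs2, cs3, w1, w2, w3; ring) end.
    unfold K1, K2 in E. rewrite Hcf, Hcb, Hcv1, Hcv2, Hcs1, Hcs2 in E. lra.
Qed.


Ltac qring := intros; repeat match goal with q : quat |- _ => let a := fresh "r" in let b := fresh "r" in let c := fresh "r" in let d := fresh "r" in destruct q as [a b c d] end;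
  unfold proj, qsub, qadd, qscale, qmul, qconj, qdot, qone, qzero; cbn [q0 q1 q2 q3];
  (match goal with |- mkQ _ _ _ _ = mkQ _ _ _ _ => f_equal | _ => idtac end); ring.

Lemma R1 p x y z : qmul (qconj (qmul (qmul p x) y)) (qmul p z) = qscale (qdot p p) (qmul (qconj (qmul x y)) z).
Proof. qring. Qed.
Lemma R2 p x z : qmul (qconj (qmul p x)) (qmul p z) = qscale (qdot p p) (qmul (qconj x) z).
Proof. qring. Qed.
Lemma R3 p z : qmul (qconj p) (qmul p z) = qscale (qdot p p) z.
Proof. qring. Qed.
Lemma R4 p x y : qdot (qmul p x) (qmul p y) = qdot p p * qdot x y.
Proof. qring. Qed.
Lemma R5 p x : qdot (qmul p x) p = qdot p p * q0 x.
Proof. qring. Qed.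
Lemma R6 p x y : qmul (qmul p x) y = qmul p (qmul x y).
Proof. qring. Qed.
Lemma NAB p b s r e : qsub (qmul p b) (qadd (qscale s p) (qscale r (qmul p e))) =
  qmul p (qsub b (qadd (qscale s qone) (qscale r e))).
Proof. qring. Qed.
Lemma PJ p x : proj p (qmul p x) = qadd (qmul p (proj qone x)) (qscale ((1 - qdot p p) * q0 x) p).
Proof. qring. Qed.
Lemma PZ p : proj p qzero = qzero.
Proof. qring. Qed.
Lemma Fadd p x y : qadd (qmul p x) (qmul p y) = qmul p (qadd x y).
Proof. qring. Qed.
Lemma Fscale p s x : qscale s (qmul p x) = qmul p (qscale s x).
Proof. qring. Qed.
Lemma Dadd x y z : qmul x (qadd y z) = qadd (qmul x y) (qmul x z).
Proof. qring. Qed.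
Lemma Dscale x s y : qmul x (qscale s y) = qscale s (qmul x y).
Proof. qring. Qed.
Lemma R7 p : qmul (qconj p) p = qscale (qdot p p) qone.
Proof. qring. Qed.
Lemma S1 x : qscale 1 x = x.
Proof. qring. Qed.
Lemma S0' r x : qscale ((1 - 1) * r) x = qzero.
Proof. qring. Qed.
Lemma Azero x : qadd x qzero = x.
Proof. qring. Qed.
Lemma Szero x : qsub x qzero = x.
Proof. qring. Qed.
Lemma back p x : qdot p p = 1 -> qmul p (qmul (qconj p) x) = x.
Proof.
  intros H. transitivity (qscale (qdot p p) x); [qring|]. rewrite H. apply S1.
Qed.

Definition Tp p e a A B :=
  qadd (qadd (qmul (qconj (qmul (qmul p e) e)) a) (qmul (qconj (qmul p e)) A))
       (qadd (qmul (qconj (qmul p e)) A) (qmul (qconj p) B)).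
Definition NBp p e A B :=
  qsub B (qadd (qscale (qdot B p + qdot A (qmul p e)) p) (qscale (qdot A p) (qmul p e))).

Lemma ALGp p a A1 A2 A3 B1 B2 B3 :
  qdot p p = 1 -> qdot a a = 1 -> qdot a p = 0 ->
  qdot a A1 = 0 -> qdot a A2 = 0 -> qdot a A3 = 0 ->
  qdot A1 p + qdot a (qmul p qi) = 0 -> qdot A2 p + qdot a (qmul p qj) = 0 ->
  qdot A3 p + qdot a (qmul p qk) = 0 ->
  qdot A1 A1 + qdot a B1 = 0 -> qdot A2 A2 + qdot a B2 = 0 -> qdot A3 A3 + qdot a B3 = 0 ->
  qdot B1 p + qdot A1 (qmul p qi) + (qdot A1 (qmul p qi) + qdot a (qmul (qmul p qi) qi)) = 0 ->
  qdot B2 p + qdot A2 (qmul p qj) + (qdot A2 (qmul p qj) + qdot a (qmul (qmul p qj) qj)) = 0 ->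
  qdot B3 p + qdot A3 (qmul p qk) + (qdot A3 (qmul p qk) + qdot a (qmul (qmul p qk) qk)) = 0 ->
  qadd (qscale (qdot a (qmul p qi)) A1)
    (qadd (qscale (qdot a (qmul p qj)) A2) (qscale (qdot a (qmul p qk)) A3)) = qscale (-1) p ->
  qadd (qsub (proj (qmul (qconj p) a) (Tp p qi a A1 B1)) qzero)
    (qadd (qsub (proj (qmul (qconj p) a) (Tp p qj a A2 B2)) qzero)
          (qsub (proj (qmul (qconj p) a) (Tp p qk a A3 B3)) qzero)) =
  qmul (qconj p)
   (qadd (qadd (qsub (proj p (NBp p qi A1 B1)) (proj p qzero))
           (qadd (qsub (proj p (NBp p qj A2 B2)) (proj p qzero))
                 (qsub (proj p (NBp p qk A3 B3)) (proj p qzero))))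
         (qscale (qdot (proj p A1) (proj p A1) + qdot (proj p A2) (proj p A2) + qdot (proj p A3) (proj p A3)) a)).
Proof.
  intros Hp Haa Hap H11 H12 H13 H21 H22 H23 H31 H32 H33 H41 H42 H43 H5.
  assert (Ea : a = qmul p (qmul (qconj p) a)) by (symmetry; apply back; auto).
  assert (E1 : A1 = qmul p (qmul (qconj p) A1)) by (symmetry; apply back; auto).
  assert (E2 : A2 = qmul p (qmul (qconj p) A2)) by (symmetry; apply back; auto).
  assert (E3 : A3 = qmul p (qmul (qconj p) A3)) by (symmetry; apply back; auto).
  assert (F1 : B1 = qmul p (qmul (qconj p) B1)) by (symmetry; apply back; auto).
  assert (F2 : B2 = qmul p (qmul (qconj p) B2)) by (symmetry; apply back; auto).
  assert (F3 : B3 = qmul p (qmul (qconj p) B3)) by (symmetry; apply back; auto).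
  set (f := qmul (qconj p) a) in *. set (u1 := qmul (qconj p) A1) in *.
  set (u2 := qmul (qconj p) A2) in *. set (u3 := qmul (qconj p) A3) in *.
  set (b1 := qmul (qconj p) B1) in *. set (b2 := qmul (qconj p) B2) in *.
  set (b3 := qmul (qconj p) B3) in *.
  clearbody f u1 u2 u3 b1 b2 b3. subst a A1 A2 A3 B1 B2 B3.
  apply (f_equal (qmul (qconj p))) in H5.
  unfold Tp, NBp in *.
  rewrite ?R1, ?R2, ?R6, ?R3, ?R4, ?R5, ?NAB, ?PJ, ?PZ, ?Dadd, ?Dscale, ?R7 in *.
  rewrite ?R3 in *.
  rewrite Hp in *.
  rewrite ?Rmult_1_l, ?S1, ?S0', ?Azero, ?Szero in *.
  rewrite ?R4 in *. rewrite Hp in *. rewrite ?Rmult_1_l in *.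
  rewrite ?Fadd, ?Fscale, ?R3, Hp, ?S1.
  apply ALG1; auto.
Qed.

Lemma DG_add G x u v : DG G x (qadd u v) = qadd (DG G x u) (DG G x v).
Proof. unfold DG, gradv, qadd; simpl; f_equal; ring. Qed.
Lemma DG_scale G x s u : DG G x (qscale s u) = qscale s (DG G x u).
Proof. unfold DG, gradv, qscale; simpl; f_equal; ring. Qed.

Lemma basis_exp p a : qdot p p = 1 ->
  a = qadd (qscale (qdot a (qmul p qi)) (qmul p qi)) (qadd (qscale (qdot a (qmul p qj)) (qmul p qj))
        (qadd (qscale (qdot a (qmul p qk)) (qmul p qk)) (qscale (qdot a p) p))).
Proof.
  intros H. transitivity (qscale (qdot p p) a); [rewrite H; symmetry; apply S1|].
  unfold qi, qj, qk. qring.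
Qed.

Lemma drop0 x y z w : qadd x (qadd y (qadd z (qscale 0 w))) = qadd x (qadd y z).
Proof. qring. Qed.

Lemma pure_i : q0 qi = 0. Proof. reflexivity. Qed.
Lemma pure_j : q0 qj = 0. Proof. reflexivity. Qed.
Lemma pure_k : q0 qk = 0. Proof. reflexivity. Qed.
Lemma unit_i : qdot qi qi = 1. Proof. unfold qdot, qi; simpl; ring. Qed.
Lemma unit_j : qdot qj qj = 1. Proof. unfold qdot, qj; simpl; ring. Qed.
Lemma unit_k : qdot qk qk = 1. Proof. unfold qdot, qk; simpl; ring. Qed.

Section Main.
Variables (V : quat -> Prop) (zeta : quat -> quat) (W : quat -> Prop) (Gq : quat -> quat).
Hypotheses (HVo : open_in_S3 V) (HWo : open4 W) (HVW : forall p, V p -> W p)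
  (HGs : smoothQ W Gq) (HGz : forall p, V p -> Gq p = zeta p)
  (Hut : unit_tangent_field V zeta) (Hgeo : geodesic_field V zeta) (Hsat : saturated V zeta).

Lemma hess_eq p e : V p -> q0 e = 0 -> qdot e e = 1 ->
  qsub (proj (qmul (qconj p) (zeta p))
          (dmap (fun q => dmap (fun p => qmul (qconj p) (zeta p)) q (qmul q e)) p (qmul p e)))
       (dmap (fun p => qmul (qconj p) (zeta p)) p (nabla (fun q => qmul q e) p (qmul p e)))
  = qsub (proj (qmul (qconj p) (Gq p)) (Tp p e (Gq p) (Aval Gq p e) (Bval Gq p e))) qzero.
Proof.
  intros Hp He He1.
  rewrite (hess_piece V zeta W Gq HVo HWo HVW HGs HGz p e Hp He).
  rewrite (frame_nabla_zero V HVo p e Hp He He1).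
  rewrite dmap_zero by (apply (VS3 V HVo); auto).
  rewrite HGz by auto. reflexivity.
Qed.

Lemma nab2_eq p e : V p -> q0 e = 0 -> qdot e e = 1 ->
  qsub (nabla (fun q => nabla zeta q (qmul q e)) p (qmul p e))
       (nabla zeta p (nabla (fun q => qmul q e) p (qmul p e)))
  = qsub (proj p (NBp p e (Aval Gq p e) (Bval Gq p e))) (proj p qzero).
Proof.
  intros Hp He He1.
  rewrite (frame_nabla_zero V HVo p e Hp He He1).
  transitivity (qsub (proj p (dmap (fun q => nabla zeta q (qmul q e)) p (qmul p e)))
                     (proj p (dmap zeta p qzero))); [reflexivity|].
  rewrite (nab_piece V zeta W Gq HVo HWo HVW HGs HGz p e Hp He).
  rewrite dmap_zero by (apply (VS3 V HVo); auto). reflexivity.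
Qed.

Lemma tension_eq p : V p ->
  tension (fun p => qmul (qconj p) (zeta p)) p =
  qmul (qconj p) (qadd (rough_lap zeta p) (qscale (grad_sq zeta p) (zeta p))).
Proof.
  intros Hp. pose proof (VS3 V HVo p Hp) as Hp1.
  change (tension (fun p => qmul (qconj p) (zeta p)) p) with
   (qadd (qsub (proj (qmul (qconj p) (zeta p))
          (dmap (fun q => dmap (fun p => qmul (qconj p) (zeta p)) q (qmul q qi)) p (qmul p qi)))
       (dmap (fun p => qmul (qconj p) (zeta p)) p (nabla (fun q => qmul q qi) p (qmul p qi))))
    (qadd (qsub (proj (qmul (qconj p) (zeta p))
          (dmap (fun q => dmap (fun p => qmul (qconj p) (zeta p)) q (qmul q qj)) p (qmul p qj)))
       (dmap (fun p => qmul (qconj p) (zeta p)) p (nabla (fun q => qmul q qj) p (qmul p qj))))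
     (qsub (proj (qmul (qconj p) (zeta p))
          (dmap (fun q => dmap (fun p => qmul (qconj p) (zeta p)) q (qmul q qk)) p (qmul p qk)))
       (dmap (fun p => qmul (qconj p) (zeta p)) p (nabla (fun q => qmul q qk) p (qmul p qk)))))).
  rewrite !hess_eq by first [exact Hp | reflexivity | apply unit_i | apply unit_j | apply unit_k].
  change (rough_lap zeta p) with
   (qadd (qsub (nabla (fun q => nabla zeta q (qmul q qi)) p (qmul p qi))
               (nabla zeta p (nabla (fun q => qmul q qi) p (qmul p qi))))
    (qadd (qsub (nabla (fun q => nabla zeta q (qmul q qj)) p (qmul p qj))
               (nabla zeta p (nabla (fun q => qmul q qj) p (qmul p qj))))
          (qsub (nabla (fun q => nabla zeta q (qmul q qk)) p (qmul p qk))
               (nabla zeta p (nabla (fun q => qmul q qk) p (qmul p qk)))))).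
  rewrite !nab2_eq by first [exact Hp | reflexivity | apply unit_i | apply unit_j | apply unit_k].
  change (grad_sq zeta p) with
   (qdot (nabla zeta p (qmul p qi)) (nabla zeta p (qmul p qi)) +
    qdot (nabla zeta p (qmul p qj)) (nabla zeta p (qmul p qj)) +
    qdot (nabla zeta p (qmul p qk)) (nabla zeta p (qmul p qk))).
  rewrite !(nabla_zeta_frame V zeta W Gq HVo HWo HVW HGs HGz p) by first [exact Hp | reflexivity].
  rewrite <- (HGz p Hp).
  destruct (unit_G V zeta Gq HGz Hut p Hp) as [Haa Hap].
  assert (T : forall e, q0 e = 0 -> qdot p (qmul p e) = 0) by (intros; apply qmul_tangent; auto).
  apply ALGp; auto;
  try (apply (I1 V zeta W Gq HVo HWo HVW HGs HGz Hut); auto);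
  try (apply (I2 V zeta W Gq HVo HWo HVW HGs HGz Hut); auto);
  try (apply (F4a V zeta W Gq HVo HWo HVW HGs HGz Hut); auto);
  try (apply (F4b V zeta W Gq HVo HWo HVW HGs HGz Hut); auto).
  pose proof (geo_DG V zeta W Gq HWo HVW HGs HGz Hgeo Hsat p Hp) as G.
  rewrite (basis_exp p (Gq p) Hp1) in G at 1.
  rewrite !DG_add, !DG_scale, Hap in G. rewrite drop0 in G. exact G.
Qed.

End Main.

Lemma gc_id x z c s : qdot x x = 1 -> qdot z z = 1 -> qdot z x = 0 -> c * c + s * s = 1 ->
  qmul (qconj (qadd (qscale c x) (qscale s z))) (qadd (qscale (- s) x) (qscale c z)) = qmul (qconj x) z.
Proof.
  intros H1 H2 H3 H4.
  transitivity (qadd (qscale (c * c + s * s) (qmul (qconj x) z))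
                     (qscale (c * s * (qdot z z - qdot x x) - 2 * s * s * qdot z x) qone)); [qring|].
  rewrite H1, H2, H3, H4. qring.
Qed.

Lemma qmul_zero x : qmul x qzero = qzero.
Proof. qring. Qed.

Theorem theoremB (V : quat -> Prop) (zeta : quat -> quat) :
  open_in_S3 V ->
  smooth_map_on V zeta ->
  unit_tangent_field V zeta ->
  geodesic_field V zeta ->
  saturated V zeta ->
  let f := fun p => qmul (qconj p) (zeta p) in
  (forall x, V x -> forall t, f (gcircle x (zeta x) t) = f x) /\
  (harmonic_map f V <-> harmonic_uvf zeta V).
Proof.
  intros HVo Hsm Hut Hgeo Hsat f.
  destruct Hsm as [W [Gq [HWo [HVW [S0 [S1 [S2 [S3 HGz]]]]]]]].
  assert (HGs : smoothQ W Gq) by exact (conj S0 (conj S1 (conj S2 S3))).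
  split.
  - intros x Hx t. unfold f. rewrite Hgeo by exact Hx. unfold gcircle.
    destruct (Hut x Hx) as [Hzx Hzz].
    apply gc_id; auto.
    + apply (VS3 V HVo); auto.
    + pose proof (sin2_cos2 t) as E. unfold Rsqr in E. lra.
  - split; intros H p Hp.
    + specialize (H p Hp). unfold f in H.
      rewrite (tension_eq V zeta W Gq HVo HWo HVW HGs HGz Hut Hgeo Hsat p Hp) in H.
      rewrite <- (back p _ (VS3 V HVo p Hp)). rewrite H. apply qmul_zero.
    + unfold f. rewrite (tension_eq V zeta W Gq HVo HWo HVW HGs HGz Hut Hgeo Hsat p Hp).
      rewrite (H p Hp). apply qmul_zero.
Qed.
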